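(* Let $(X,\Sigma,\mu)$ be a probability space, $K$ a closed subset of $2^\omega$, and $f,g\colon X\to K$ measurable functions with $f\neq g$ $\mu$-almost everywhere. Then for every $\varepsilon>0$ there is $L\in\Sigma$ such that $\mu(L)>1/4-\varepsilon$ and $f[L]\cap g[L]=\emptyset$. *)

(* Defs.v *)
From HB Require Import structures.
From mathcomp Require Import all_boot all_order all_algebra.
From mathcomp Require Import all_classical all_reals all_analysis.
Set Implicit Arguments. Unset Strict Implicit. Unset Printing Implicit Defensive.
Import Order.TTheory GRing.Theory Num.Theory.
Local Open Scope classical_set_scope.

(* The Cantor space 2^omega is mathcomp-analysis' [cantor_space]
   (= nat -> bool with the product topology). *)

Definition cantor_borel : set (set cantor_space) :=
  <<s [set: cantor_space], @open cantor_space >>.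

Definition cantor_measurable (d : measure_display) (X : measurableType d)
  (f : X -> cantor_space) : Prop :=
  forall B, cantor_borel B -> measurable (f @^-1` B).

(* Main.v *)
Require Import Defs.
From HB Require Import structures.
From mathcomp Require Import all_boot all_order all_algebra.
From mathcomp Require Import all_classical all_reals all_analysis.
From mathcomp Require Import lra.
Import Order.TTheory GRing.Theory Num.Theory.
Local Open Scope classical_set_scope.
Local Open Scope ring_scope.
Section greedy.
Context d (X : measurableType d) (R : realType) (mu : probability X R)
  (P : finType) (pp : X -> P * P)
  (mpp : forall A, measurable (pp @^-1` A)).

Definition mm (b : pred (P * P)) : R := fine (mu (pp @^-1` [set z | b z])).

Lemma mm_fin b : mu (pp @^-1` [set z | b z]) \is a fin_num.
Proof.
rewrite ge0_fin_numE ?measure_ge0 //.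
by apply: (le_lt_trans (probability_le1 mu (mpp _))); rewrite ltry.
Qed.

Lemma mm_ge0 b : 0 <= mm b.
Proof. by rewrite /mm fine_ge0 // measure_ge0. Qed.

Lemma mm_ext a b : a =1 b -> mm a = mm b.
Proof. by move=> ab; rewrite /mm; congr (fine (mu _)); apply/funext => x /=; rewrite ab. Qed.

Lemma mm0 : mm pred0 = 0.
Proof.
rewrite /mm; have -> : pp @^-1` [set z | pred0 z] = set0 by apply/seteqP; split => x.
by rewrite measure0.
Qed.

Lemma mm_add a b : (forall z, a z && b z = false) ->
  mm [pred z | a z || b z] = mm a + mm b.
Proof.
move=> ab; rewrite /mm.
have -> : pp @^-1` [set z | [pred z | a z || b z] z] =
  pp @^-1` [set z | a z] `|` pp @^-1` [set z | b z].
  by apply/funext => x /=; apply/propext; split => [/orP|[]->]; rewrite ?orbT.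
rewrite measureU ?mpp //; first by rewrite fineD ?mm_fin.
apply/funext => x /=; apply/propext; split => // -[ha hb].
by move: (ab (pp x)); rewrite ha hb.
Qed.


Definition Ds (s : seq P) (z : P * P) : bool :=
  [&& z.1 != z.2, z.1 \in s & z.2 \in s].

Lemma greedy_seq (s : seq P) : uniq s -> exists c : P -> bool,
  mm (Ds s) <= 2 * mm [pred z | Ds s z && (c z.1 != c z.2)].
Proof.
elim: s => [_|v s IH /= /andP[vs us]].
  exists (fun=> true); rewrite (@mm_ext (Ds [::]) pred0) ?mm0; last by move=> z; rewrite /Ds /= andbF.
  by rewrite mulr_ge0 // mm_ge0.
have [c Hc] := IH us.
pose E z := (z.1 != z.2) && (((z.1 == v) && (z.2 \in s)) || ((z.2 == v) && (z.1 \in s))).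
pose cb (b : bool) p := if p == v then b else c p.
have DE : Ds (v :: s) =1 [pred z | Ds s z || E z].
  move=> [p q]; rewrite /Ds /E /= !in_cons.
  case: (eqVneq p v) => [->|pv]; case: (eqVneq q v) => [->|qv];
    move: vs; case: (v \in s) => // _; rewrite ?eqxx /=;
    try case: (p \in s); try case: (q \in s); rewrite /= ?andbF ?andbT ?orbF //;
    by case: (_ != _).
have DEd z : Ds s z && E z = false.
  case: z => p q; rewrite /Ds /E /=.
  case: (eqVneq p v) => [->|pv]; case: (eqVneq q v) => [->|qv];
    move: vs; case: (v \in s) => // _; rewrite ?eqxx /=;
    try case: (p \in s); try case: (q \in s); rewrite /= ?andbF ?andbT ?orbF //;
    by case: (_ != _).
have Dcb b z : Ds s z -> cb b z.1 = c z.1 /\ cb b z.2 = c z.2.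
  case: z => p q; rewrite /Ds /cb /= => /and3P[_ ps qs].
  by case: eqP ps => [->|]; [rewrite (negbTE vs)|]; case: eqP qs => [->|];
    rewrite ?(negbTE vs).
have split b : mm [pred z | Ds (v :: s) z && (cb b z.1 != cb b z.2)] =
   mm [pred z | Ds s z && (c z.1 != c z.2)] +
   mm [pred z | E z && (cb b z.1 != cb b z.2)].
  rewrite -mm_add; last first.
    by move=> z /=; have := DEd z; case: (Ds s z); case: (E z); rewrite /= ?andbF ?andFb.
  apply: mm_ext => z /=; rewrite DE /=.
  case Dz: (Ds s z) => /=; last by [].
  have := DEd z; rewrite Dz /= => Ez; rewrite Ez /= orbF; by have [-> ->] := Dcb b z Dz.
have Esplit : mm E = mm [pred z | E z && (cb true z.1 != cb true z.2)] +
   mm [pred z | E z && (cb false z.1 != cb false z.2)].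
  rewrite -mm_add; last first.
    move=> [p q] /=; rewrite /E /cb /=.
    case: (eqVneq p v) => [->|pv]; case: (eqVneq q v) => [->|qv];
      rewrite ?eqxx ?andbF //=; case: (c _) => //=; by rewrite !andbF.
  apply: mm_ext => -[p q] /=; rewrite /E /cb /=.
  case: (eqVneq p v) => [->|pv]; case: (eqVneq q v) => [->|qv];
    rewrite ?eqxx ?andbF //=; case: (c _); by rewrite ?andbF ?andbT //= ?orbF ?orbT.
have Dsum : mm (Ds (v :: s)) = mm (Ds s) + mm E.
  by rewrite (mm_ext _ _ DE) (mm_add _ _ DEd).
have [b Hb] : exists b, mm E <= 2 * mm [pred z | E z && (cb b z.1 != cb b z.2)].
  case: (lerP (mm E) (2 * mm [pred z | E z && (cb true z.1 != cb true z.2)])) => H.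
    by exists true.
  by exists false; lra.
exists (cb b); rewrite split Dsum; lra.
Qed.


Lemma directed : exists c : P -> bool,
  mm [pred z | z.1 != z.2] <= 4 * mm [pred z | ~~ c z.1 && c z.2].
Proof.
have [c Hc] := @greedy_seq (enum P) (enum_uniq P).
have E1 : Ds (enum P) =1 [pred z | z.1 != z.2].
  by move=> z; rewrite /Ds !mem_enum /= !andbT.
have E2 : [pred z | Ds (enum P) z && (c z.1 != c z.2)] =1
   [pred z | (~~ c z.1 && c z.2) || (c z.1 && ~~ c z.2)].
  move=> [p q] /=; rewrite /Ds !mem_enum /= !andbT.
  case: (eqVneq p q) => [->|pq]; first by case: (c q).
  by case: (c p); case: (c q).
rewrite (mm_ext _ _ E1) (mm_ext _ _ E2) mm_add in Hc; last first.
  by move=> z; case: (c z.1); case: (c z.2).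
have E3 : [pred z | ~~ ~~ c z.1 && ~~ c z.2] =1 [pred z | c z.1 && ~~ c z.2].
  by move=> z /=; rewrite negbK.
case: (lerP (mm [pred z | c z.1 && ~~ c z.2]) (mm [pred z | ~~ c z.1 && c z.2])) => H.
  by exists c; lra.
by exists (fun p => ~~ c p); rewrite (mm_ext _ _ E3); lra.
Qed.

End greedy.
Definition pre N (y : cantor_space) : {ffun 'I_N -> bool} := [ffun i : 'I_N => y (nat_of_ord i)].

Lemma open_coord (k : nat) (B : set bool) : open [set y : cantor_space | B (y k)].
Proof.
have hc : continuous (fun y : cantor_space => y k) := @proj_continuous nat (fun _ => bool) k.
have := (continuousP _).1 hc.
by move=> /(_ B (discrete_open _)).
Qed.

Lemma pre_open1 N (p : {ffun 'I_N -> bool}) : open [set y | pre N y = p].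
Proof.
have -> : [set y | pre N y = p] = [set y : cantor_space | forall i : 'I_N, (i < N)%N -> y i = p i].
  apply/seteqP; split => y /=.
    by move=> <- i _; rewrite ffunE.
  by move=> H; apply/ffunP => i; rewrite ffunE H.
suff: forall k, open [set y : cantor_space | forall i : 'I_N, (i < k)%N -> y i = p i] by apply.
elim => [|k IH].
  have -> : [set y : cantor_space | forall i : 'I_N, (i < 0)%N -> y i = p i] = setT.
    by apply/seteqP; split => y //= _ i.
  exact: openT.
have -> : [set y : cantor_space | forall i : 'I_N, (i < k.+1)%N -> y i = p i] =
  [set y : cantor_space | forall i : 'I_N, (i < k)%N -> y i = p i] `&`
  [set y : cantor_space | (fun b => forall i : 'I_N, (i == k :> nat) -> b = p i) (y k)].
  apply/seteqP; split => y /=.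
    move=> H; split => i ik; first by apply: H; rewrite ltnS ltnW.
    move/eqP: ik => ik; rewrite -ik; apply: H; by rewrite ik.
  move=> [H1 H2] i; rewrite ltnS leq_eqVlt => /orP[/eqP ik|ik].
    by rewrite -(H2 i) ?ik.
  exact: H1.
have Hc := open_coord k (fun b => forall i : 'I_N, (i == k :> nat) -> b = p i).
exact: (openI IH Hc).
Qed.

Lemma pre_open N (A : set {ffun 'I_N -> bool}) : open (pre N @^-1` A).
Proof.
have -> : pre N @^-1` A = \bigcup_(p in A) [set y | pre N y = p].
  apply/seteqP; split => y /=; first by move=> Ay; exists (pre N y).
  by move=> [p Ap ->].
apply: bigcup_open => p _; exact: pre_open1.
Qed.

Lemma pre_borel N (A : set {ffun 'I_N -> bool}) : cantor_borel (pre N @^-1` A).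
Proof. by apply: sub_sigma_algebra; exact: pre_open. Qed.


Lemma pre_neq n (a b : cantor_space) :
  pre n a != pre n b <-> exists i, (i < n)%N /\ a i != b i.
Proof.
split.
  move=> Hn; case: (pselect (exists i, (i < n)%N /\ a i != b i)) => // H.
  exfalso; move/negP: Hn; apply; apply/eqP/ffunP => i; rewrite !ffunE.
  apply/eqP; apply/negPn/negP => hi; apply: H; exists i; split => //.
move=> [i [lt ne]]; apply/negP => /eqP/ffunP/(_ (Ordinal lt)); rewrite !ffunE => e.
by move: ne; rewrite e eqxx.
Qed.

Theorem lemma7p8 (d : measure_display) (X : measurableType d) (R : realType)
  (mu : probability X R) (K : set cantor_space) (f g : X -> cantor_space) :
  closed K ->
  (forall x, K (f x)) -> (forall x, K (g x)) ->
  cantor_measurable f -> cantor_measurable g ->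
  {ae mu, forall x, f x <> g x} ->
  forall eps : R, 0 < eps ->
  exists L : set X, measurable L /\
    ((4%:R^-1 - eps)%:E < mu L)%E /\ f @` L `&` g @` L = set0.
Proof.
move=> _ _ _ mf mg ae eps eps0.
pose pp N x := (pre N (f x), pre N (g x)).
have mpp N (A : set ({ffun 'I_N -> bool} * {ffun 'I_N -> bool})) :
    measurable (pp N @^-1` A).
  have -> : pp N @^-1` A = \bigcup_(z in A)
      (f @^-1` (pre N @^-1` [set z.1]) `&` g @^-1` (pre N @^-1` [set z.2])).
    apply/seteqP; split => x /=; first by move=> Ax; exists (pp N x).
    by move=> [[z1 z2] Az [/= e1 e2]]; rewrite /pp e1 e2.
  apply: fin_bigcup_measurable; first exact: finite_finset.
  by move=> z _; apply: measurableI; [apply: mf|apply: mg]; apply: pre_borel.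
pose D n := pp n @^-1` [set z | z.1 != z.2].
have mD n : measurable (D n) by apply: mpp.
have ndD : nondecreasing_seq D.
  move=> n m nm; apply/subsetPset => x; rewrite /D /pp /= => /pre_neq [i [lt ne]].
  by apply/pre_neq; exists i; split => //; apply: leq_trans nm.
have cv := nondecreasing_cvg_mu (mu:=mu) (F:=D) mD (bigcupT_measurable D mD) ndD.
have big1 : (1 <= mu (\bigcup_n D n))%E.
  case: ae => A0 [mA0 muA0 sA0].
  have : (mu (~` A0) <= mu (\bigcup_n D n))%E.
    apply: le_measure; rewrite ?inE //; first exact: measurableC.
      exact: bigcupT_measurable.
    move=> x nA0; have : f x <> g x.
      by move=> e; apply: nA0; apply: sA0 => /=; apply.
    move=> fg; have [i ne] : exists i, f x i != g x i.
      apply/not_existsP => H; apply: fg; apply/funext => i.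
      by apply/eqP/negPn/negP => ne; apply: (H i).
    exists i.+1 => //; rewrite /D /pp /=; apply/pre_neq; exists i; split => //.
  by rewrite probability_setC // muA0 sube0.
have lt1 : ((1 - 4 * eps)%:E < mu (\bigcup_n D n))%E.
  apply: lt_le_trans big1; rewrite lte_fin; lra.
have [N0 _ HN0] := cv _ (open_ereal_gt' lt1).
have HN := HN0 N0 (leqnn N0); rewrite /= in HN.
have [c Hc] := @directed _ _ _ mu _ _ (mpp N0).
exists (pp N0 @^-1` [set z | ~~ c z.1 && c z.2]); split; first exact: mpp.
split.
  rewrite -(fineK (@mm_fin _ _ _ mu _ _ (mpp N0) _)) lte_fin.
  have : (1 - 4 * eps) < @mm _ _ _ mu _ (pp N0) [pred z | z.1 != z.2].
    by rewrite -lte_fin /mm fineK ?(@mm_fin _ _ _ mu _ _ (mpp N0)).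
  rewrite /mm /= in Hc * => H.
  lra.
apply/seteqP; split => // y /= [[x1 Lx1 e1] [x2 Lx2 e2]].
move: Lx1 Lx2; rewrite /pp /= e1 -e2.
by move=> /andP[h1 _] /andP[_ h2]; rewrite h2 in h1.
Qed.
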